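(* Let $T_{\mu\nu}$ be a given stress-energy tensor on a four-dimensional spacetime, $\kappa=8\pi G/c^4$, $\Lambda\in\mathbb{R}$, and $f$ a differentiable real function. If a metric $g_{\mu\nu}$ is simultaneously a solution of Einstein's field equations $R_{\mu\nu}-\tfrac12 Rg_{\mu\nu}+\Lambda g_{\mu\nu}=\kappa T_{\mu\nu}$ and of the $f(R)$ field equations $f'(R)R_{\mu\nu}-\tfrac12 f(R)g_{\mu\nu}-\nabla_\mu\nabla_\nu f'(R)+\square f'(R)g_{\mu\nu}=\kappa T_{\mu\nu}$, and its Ricci scalar $R=g^{\mu\nu}R_{\mu\nu}$ equals a constant $k$, then $$k f'(k)-2f(k)+k-4\Lambda=0.$$
   Context: $R_{\mu\nu}$ is the Ricci tensor of $g_{\mu\nu}$, $\nabla$ its Levi-Civita connection and $\square=g^{\mu\nu}\nabla_\mu\nabla_\nu$. *)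

(* Defs.v *)
(* spacetime described in a coordinate chart U ⊆ R^4. *)
From HB Require Import structures.
From mathcomp Require Import all_boot all_order all_algebra.
From mathcomp Require Import all_classical all_reals all_analysis.

Set Implicit Arguments.
Unset Strict Implicit.
Unset Printing Implicit Defensive.

Import Order.TTheory GRing.Theory Num.Theory.
Import numFieldNormedType.Exports.
Local Open Scope classical_set_scope.
Local Open Scope ring_scope.

Notation point R := 'rV[R]_4.

Definition pd {R : realType} (F : point R -> R) (k : 'I_4) (x : point R) : R :=
  derive F x (delta_mx 0 k).

Definition ginv {R : realType} (g : point R -> 'M[R]_4) (x : point R) : 'M[R]_4 :=
  invmx (g x).

Definition christoffel {R : realType} (g : point R -> 'M[R]_4) (a b c : 'I_4)
  (x : point R) : R :=
  2^-1 * \sum_(d < 4) ginv g x a d *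
     (pd (fun y => g y d c) b x + pd (fun y => g y d b) c x
      - pd (fun y => g y b c) d x).

Definition ricci {R : realType} (g : point R -> 'M[R]_4) (b c : 'I_4)
  (x : point R) : R :=
  \sum_(a < 4) (pd (christoffel g a b c) a x - pd (christoffel g a b a) c x
    + \sum_(d < 4) (christoffel g a a d x * christoffel g d b c x
                    - christoffel g a c d x * christoffel g d b a x)).

Definition ricci_scalar {R : realType} (g : point R -> 'M[R]_4) (x : point R) : R :=
  \sum_(m < 4) \sum_(n < 4) ginv g x m n * ricci g m n x.

Definition cov_hess {R : realType} (g : point R -> 'M[R]_4) (phi : point R -> R)
  (m n : 'I_4) (x : point R) : R :=
  pd (pd phi n) m x - \sum_(l < 4) christoffel g l m n x * pd phi l x.

Definition box {R : realType} (g : point R -> 'M[R]_4) (phi : point R -> R)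
  (x : point R) : R :=
  \sum_(m < 4) \sum_(n < 4) ginv g x m n * cov_hess g phi m n x.

Definition kappa {R : realType} (G c : R) : R := 8 * pi * G / c ^+ 4.

(* Main.v *)
Require Import Defs.
From HB Require Import structures.
From mathcomp Require Import all_boot all_order all_algebra.
From mathcomp Require Import all_classical all_reals all_analysis.
From mathcomp Require Import ring lra.
Import Order.TTheory GRing.Theory Num.Theory.
Import numFieldNormedType.Exports.
Local Open Scope classical_set_scope.
Local Open Scope ring_scope.

Lemma pd_loc_cst (R : realType) (U : set 'rV[R]_4) (F : 'rV[R]_4 -> R) (a : R)
  (y : 'rV[R]_4) (l : 'I_4) :
  open U -> U y -> (forall z, U z -> F z = a) -> pd F l y = 0.
Proof.
move=> oU Uy HF; rewrite /pd.
have -> : derive F y (delta_mx 0 l) = derive (cst a) y (delta_mx 0 l).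
  apply: near_eq_derive.
  have : \forall z \near y, U z by apply: open_nbhs_nbhs; split.
  by apply: filterS => z /HF.
exact: derive_cst.
Qed.

Theorem mainTheorem2 (R : realType) (U : set 'rV[R]_4)
  (g T : 'rV[R]_4 -> 'M[R]_4) (f : R -> R) (G c Lambda k : R) :
  open U -> (exists x, U x) ->
  0 < G -> 0 < c ->
  (* g is a metric on U: symmetric, nondegenerate, twice differentiable *)
  (forall x, U x -> (g x)^T = g x /\ g x \in unitmx) ->
  (forall x, U x -> forall i j : 'I_4,
     differentiable (fun y => g y i j) x /\
     forall l : 'I_4, differentiable (pd (fun y => g y i j) l) x) ->
  (* f is differentiable *)
  (forall r : R, derivable f r 1) ->
  (* Einstein's field equations *)
  (forall x, U x -> forall m n : 'I_4,
     ricci g m n x - 2^-1 * ricci_scalar g x * g x m n + Lambda * g x m n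
       = kappa G c * T x m n) ->
  (* f(R) field equations *)
  (forall x, U x -> forall m n : 'I_4,
     derive1 f (ricci_scalar g x) * ricci g m n x
       - 2^-1 * f (ricci_scalar g x) * g x m n
       - cov_hess g (fun y => derive1 f (ricci_scalar g y)) m n x
       + box g (fun y => derive1 f (ricci_scalar g y)) x * g x m n
       = kappa G c * T x m n) ->
  (* constant Ricci scalar *)
  (forall x, U x -> ricci_scalar g x = k) ->
  k * derive1 f k - 2 * f k + k - 4 * Lambda = 0.
Proof.
move=> oU [x Ux] _ _ Hg _ _ HE HF Hk.
set phi := fun y => derive1 f (ricci_scalar g y).
have Hphi : forall z, U z -> phi z = derive1 f k by move=> z Uz; rewrite /phi Hk.
have H1 : forall l, pd phi l x = 0 by move=> l; exact: (@pd_loc_cst _ U phi _ x l oU Ux Hphi).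
have H2 : forall m n, pd (pd phi n) m x = 0.
  by move=> m n; apply: (@pd_loc_cst _ U _ 0 x m oU Ux) => z Uz; exact: (@pd_loc_cst _ U phi _ z n oU Uz Hphi).
have Hch : forall m n, cov_hess g phi m n x = 0.
  move=> m n; rewrite /cov_hess H2 big1 ?subr0 // => l _; by rewrite H1 mulr0.
have Hbox : box g phi x = 0.
  by rewrite /box big1 // => m _; rewrite big1 // => n _; rewrite Hch mulr0.
have Hkx := Hk x Ux.
have Heq : forall m n, derive1 f k * ricci g m n x - 2^-1 * f k * g x m n
   = ricci g m n x - 2^-1 * k * g x m n + Lambda * g x m n.
  move=> m n; rewrite -Hkx (HE x Ux m n) -(HF x Ux m n) -/phi Hch Hbox.
  by rewrite mul0r subr0 addr0.
have [gT gU] := Hg x Ux.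
set A := ginv g x.
have Htr : \sum_(m < 4) \sum_(n < 4) A m n * g x m n = 4.
  have : \tr (A *m (g x)^T) = 4.
    by rewrite gT /A /ginv mulVmx // mxtrace1.
  rewrite /mxtrace => <-; apply: eq_bigr => m _; rewrite mxE.
  by apply: eq_bigr => n _; rewrite mxE.
have Hric : \sum_(m < 4) \sum_(n < 4) A m n * ricci g m n x = k by rewrite -Hkx.
have : \sum_(m < 4) \sum_(n < 4) A m n *
   (derive1 f k * ricci g m n x - 2^-1 * f k * g x m n)
  = \sum_(m < 4) \sum_(n < 4) A m n *
   (ricci g m n x - 2^-1 * k * g x m n + Lambda * g x m n).
  by apply: eq_bigr => m _; apply: eq_bigr => n _; rewrite Heq.
have E1 : forall a b, \sum_(m < 4) \sum_(n < 4) A m n * (a * ricci g m n x + b * g x m n)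
   = a * k + b * 4.
  move=> a b; rewrite -Hric -Htr !mulr_sumr -big_split /=; apply: eq_bigr => m _.
  rewrite !mulr_sumr -big_split /=; apply: eq_bigr => n _; ring.
have L : \sum_(m < 4) \sum_(n < 4) A m n *
   (derive1 f k * ricci g m n x - 2^-1 * f k * g x m n)
   = derive1 f k * k + (- (2^-1 * f k)) * 4.
  rewrite -E1; apply: eq_bigr => m _; apply: eq_bigr => n _; congr (_ * _); ring.
have Rr : \sum_(m < 4) \sum_(n < 4) A m n *
   (ricci g m n x - 2^-1 * k * g x m n + Lambda * g x m n)
   = 1 * k + (Lambda - 2^-1 * k) * 4.
  rewrite -E1; apply: eq_bigr => m _; apply: eq_bigr => n _; congr (_ * _); ring.
rewrite L Rr => h.
move: h; generalize (derive1 f k) (f k) => d F h.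
clear -h; lra.
Qed.
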